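(* Let $n\geq 2$ and let $m\geq 2$ be an integer. Let $f\in L^{m/(m-1)}(\mathbb{R}^n)$ be a continuous nonnegative function with $f = f^{*_{\mathbf{e}}}$ for some $\mathbf{e}\in\mathbb{S}^{n-1}$, and assume that $$f(x) = h(x)\,(f*\cdots*f)(x)\quad\text{for all } x\in\mathbb{R}^n,$$ where the convolution product has $m$ factors and $h:\mathbb{R}^n\to(0,+\infty)$ is a continuous positive function. Then the set $\{x\in\mathbb{R}^n : f(x)>0\}$ is connected.
   Context: Symmetric-decreasing rearrangement: for a finite-measure set $A\subset\mathbb{R}^k$, $A^*$ is the centered open ball with the same measure; for measurable $u$ vanishing at infinity, $u^*(x)=\int_0^\infty\chi_{\{|u|>t\}^*}(x)\,dt$. Steiner symmetrization: with $x=(x_1,x')\in\mathbb{R}\times\mathbb{R}^{n-1}$, $u^{*_1}(x_1,x') := (u(x_1,\cdot))^*(x')$ (rearrangement in $\mathbb{R}^{n-1}$ for fixed $x_1$); for $\mathbf{e}\in\mathbb{S}^{n-1}$ pick $\mathsf{R}\in\mathrm{O}(n)$ with $\mathsf{R}\mathbf{e}=(1,0,\dots,0)$, $(\mathsf{R}u)(x)=u(\mathsf{R}^{-1}x)$, $u^{*_{\mathbf{e}}}:=\mathsf{R}^{-1}((\mathsf{R}u)^{*_1})$. *)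

(* Defs.v *)
From HB Require Import structures.
From mathcomp Require Import all_boot all_order all_algebra.
From mathcomp Require Import all_classical all_reals all_analysis.
Set Implicit Arguments. Unset Strict Implicit. Unset Printing Implicit Defensive.
Import Order.TTheory GRing.Theory Num.Theory.
Local Open Scope classical_set_scope.
Local Open Scope ring_scope.

(* Lebesgue (Borel) measure on R^k, realised as the k-fold product of   *)
(* the one-dimensional Lebesgue measure, transported to row vectors    *)
(* 'rV[R]_k through the coordinate bijection lp_coord.                 *)

Record lebpack (R : realType) (k : nat) := LebPack {
  lp_disp : measure_display;
  lp_type : measurableType lp_disp;
  lp_meas : {sigma_finite_measure set lp_type -> \bar R};
  lp_coord : lp_type -> 'rV[R]_k }.

(* the row vector (t, y_1, ..., y_k) *)
Definition vcons (R : realType) (k : nat) (t : R) (y : 'rV[R]_k) : 'rV[R]_k.+1 :=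
  \row_(i < k.+1) match unlift ord0 i with None => t | Some j => y ord0 j end.

Definition vtail (R : realType) (k : nat) (x : 'rV[R]_k.+1) : 'rV[R]_k :=
  \row_(j < k) x ord0 (lift ord0 j).

Definition vhead (R : realType) (k : nat) (x : 'rV[R]_k.+1) : R := x ord0 ord0.

(* product of two sigma-finite measures, packaged as a sigma-finite measure
   (the library's own instance is shadowed by another canonical instance) *)
Section lprod.
Local Open Scope ereal_scope.
Context d1 d2 (T1 : measurableType d1) (T2 : measurableType d2) (R : realType).
Variable m1 : {sigma_finite_measure set T1 -> \bar R}.
Variable m2 : {sigma_finite_measure set T2 -> \bar R}.

Definition lprod : set (T1 * T2) -> \bar R := (m1 \x m2)%E.

HB.instance Definition _ := Measure.on lprod.

Lemma lprod_sigma_finite : sigma_finite setT lprod.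
Proof.
have /sigma_finiteP[F [TF ndF Foo]] := sigma_finiteT m1.
have /sigma_finiteP[G [TG ndG Goo]] := sigma_finiteT m2.
exists (fun n => F n `*` G n).
 rewrite -setXTT TF TG predeqE => -[x y]; split.
    move=> [/= [n _ Fnx] [k _ Gky]]; exists (maxn n k) => //; split.
    - by move: x Fnx; exact/subsetPset/ndF/leq_maxl.
    - by move: y Gky; exact/subsetPset/ndG/leq_maxr.
  by move=> [n _ []/= ? ?]; split; exists n.
move=> k; have [? ?] := Foo k; have [? ?] := Goo k.
split; first exact: measurableX.
by rewrite /lprod product_measure1E// lte_mul_pinfty// ge0_fin_numE.
Qed.

HB.instance Definition _ := Measure_isSigmaFinite.Build _ _ _ lprod
  lprod_sigma_finite.

End lprod.

Fixpoint leb_pack (R : realType) (k : nat) : lebpack R k :=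
  match k with
  | 0 => @LebPack R 0 _ unit [the {sigma_finite_measure set unit -> \bar R} of @dirac _ unit tt R]
           (fun _ => 0)
  | k'.+1 =>
      let P := leb_pack R k' in
      @LebPack R k'.+1 _ (measurableTypeR R * lp_type P)%type
        (@lprod _ _ _ _ R (@lebesgue_measure R) (lp_meas P))
        (fun z => vcons z.1 (lp_coord z.2))
  end.

Definition lebn (R : realType) (k : nat) (A : set 'rV[R]_k) : \bar R :=
  lp_meas (leb_pack R k) (@lp_coord _ _ (leb_pack R k) @^-1` A).

Definition integn (R : realType) (k : nat) (g : 'rV[R]_k -> \bar R) : \bar R :=
  (\int[lp_meas (leb_pack R k)]_z g (@lp_coord _ _ (leb_pack R k) z))%E.

Definition enorm (R : realType) (k : nat) (x : 'rV[R]_k) : R :=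
  Num.sqrt (\sum_(i < k) x ord0 i ^+ 2).

Definition unit_sphere (R : realType) (k : nat) : set 'rV[R]_k :=
  [set e | enorm e = 1].

(* orthogonal matrices O(k); a matrix Q acts on row vectors by x |-> x *m Q^T,
   i.e. it is the usual action Q x on column vectors, transposed *)
Definition orthogonal_mx (R : realType) (k : nat) (Q : 'M[R]_k) : Prop :=
  Q^T *m Q = 1%:M.

Definition e1 (R : realType) (k : nat) : 'rV[R]_k.+1 := delta_mx ord0 ord0.

(* A^* : the centered open ball with the same measure as A
   (x belongs to A^* iff x lies in a centered open ball of measure |A|) *)
Definition sym_set (R : realType) (k : nat) (A : set 'rV[R]_k) : set 'rV[R]_k :=
  [set x | exists r : R, enorm x < r /\ lebn [set y : 'rV[R]_k | enorm y < r] = lebn A].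

Definition level_set (R : realType) (k : nat) (u : 'rV[R]_k -> R) (t : R) : set 'rV[R]_k :=
  [set y | t < `|u y|].

Definition vanishes_at_infinity (R : realType) (k : nat) (u : 'rV[R]_k -> R) : Prop :=
  forall t : R, 0 < t -> (lebn (level_set u t) < +oo)%E.

Definition sym_dec (R : realType) (k : nat) (u : 'rV[R]_k -> R) (x : 'rV[R]_k) : \bar R :=
  (\int[@lebesgue_measure R]_(t in [set t : R | (0 <= t)%R])
      (\1_(sym_set (level_set u t)) x)%:E)%E.

(* u^{*_1}(x_1, x') = (u(x_1, .))^*(x'), in dimension k+1 *)
Definition steiner1 (R : realType) (k : nat) (u : 'rV[R]_k.+1 -> R) (x : 'rV[R]_k.+1) : \bar R :=
  sym_dec (fun y : 'rV[R]_k => u (vcons (vhead x) y)) (vtail x).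

(* all the slices u(x_1, .) vanish at infinity (so that u^{*_1} is defined) *)
Definition slices_vanish (R : realType) (k : nat) (u : 'rV[R]_k.+1 -> R) : Prop :=
  forall t : R, vanishes_at_infinity (fun y : 'rV[R]_k => u (vcons t y)).

(* rotation of a function: (Q u)(x) = u(Q^{-1} x), with Q^{-1} x = x *m Q *)
Definition rotf (R : realType) (k : nat) (Q : 'M[R]_k) (u : 'rV[R]_k -> R) : 'rV[R]_k -> R :=
  fun x => u (x *m Q).

(* u^{*_e} = Q^{-1}((Q u)^{*_1}) where Q e = e_1 *)
Definition steinerQ (R : realType) (n : nat) : 'M[R]_n -> ('rV[R]_n -> R) -> 'rV[R]_n -> \bar R :=
  match n with
  | 0 => fun _ u x => (u x)%:E
  | k.+1 => fun Q u x => steiner1 (rotf Q u) (x *m Q^T)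
  end.

Definition steinerQ_defined (R : realType) (n : nat) : 'M[R]_n -> ('rV[R]_n -> R) -> Prop :=
  match n with
  | 0 => fun _ _ => True
  | k.+1 => fun Q u => slices_vanish (rotf Q u)
  end.

Definition rot_to_e1 (R : realType) (n : nat) : 'rV[R]_n -> 'M[R]_n -> Prop :=
  match n with
  | 0 => fun _ _ => False
  | k.+1 => fun e Q => orthogonal_mx Q /\ e *m Q^T = e1 R k
  end.

Definition conv (R : realType) (n : nat) (g1 g2 : 'rV[R]_n -> \bar R) (x : 'rV[R]_n) : \bar R :=
  integn (fun y : 'rV[R]_n => (g1 (x - y)%R * g2 y)%E).

(* convpow g k = g * g * ... * g  (k+1 factors) *)
Fixpoint convpow (R : realType) (n : nat) (g : 'rV[R]_n -> \bar R) (k : nat) : 'rV[R]_n -> \bar R :=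
  match k with
  | 0 => g
  | k'.+1 => conv g (convpow g k')
  end.

(* the m-fold convolution product f * ... * f (m factors, m >= 1) *)
Definition mconv (R : realType) (n : nat) (f : 'rV[R]_n -> R) (m : nat) : 'rV[R]_n -> \bar R :=
  convpow (fun x => (f x)%:E) m.-1.

(* f in L^p(R^n) (f continuous hence measurable): \int |f|^p < oo *)
Definition in_Lp (R : realType) (n : nat) (p : R) (f : 'rV[R]_n -> R) : Prop :=
  (integn (fun x => (`|f x| `^ p)%:E) < +oo)%E.

(* Main.v *)
Require Import Defs.
From HB Require Import structures.
From mathcomp Require Import all_boot all_order all_algebra.
From mathcomp Require Import all_classical all_reals all_analysis.
From mathcomp Require Import ring lra.
Set Implicit Arguments. Unset Strict Implicit. Unset Printing Implicit Defensive.
Import Order.TTheory GRing.Theory Num.Theory.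
Import numFieldNormedType.Exports.
Local Open Scope classical_set_scope.
Local Open Scope ring_scope.

Section reals.
Variable R : realType.

Lemma shift_up (P : set R) a d : 0 < d -> (forall x, a <= x < a + d -> P x) ->
  (forall p, P p -> P (p + d)) -> forall x, a <= x -> P x.
Proof.
move=> d0 base sh.
have H : forall k : nat, forall x, a <= x < a + k%:R * d -> P x.
  elim=> [|k IH] x /andP[ax xk].
    by rewrite mul0r addr0 in xk; have := le_lt_trans ax xk; rewrite ltxx.
  case: (ltP x (a + d)) => hx; first by apply: base; rewrite ax hx.
  have -> : x = (x - d) + d by rewrite subrK.
  apply: sh; apply: IH; apply/andP; split; first by lra.
  by move: xk; rewrite -natr1 mulrDl mul1r; lra.
move=> x ax; apply: (H (Num.trunc ((x - a) / d)).+1); apply/andP; split => //.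
have := truncnS_gt ((x - a) / d); rewrite ltr_pdivrMr // => h; lra.
Qed.


Lemma semigroup_small (G : set R) x y dl :
  (forall a b, G a -> G b -> G (a + b)) -> 0 < x -> y < 0 -> 0 < dl ->
  (forall z, `|z - x| < dl -> G z) -> (forall z, `|z - y| < dl -> G z) ->
  forall eps, 0 < eps -> exists g, G g /\ 0 < g < eps.
Proof.
move=> Gadd x0 y0 dl0 Gx Gy eps eps0.
have mult : forall N : nat, forall a, G a -> G (N.+1%:R * a).
  elim=> [|N IH] a Ga; first by rewrite mul1r.
  by rewrite -natr1 mulrDl mul1r; apply: Gadd => //; apply: IH.
pose L := (Num.truncn (x / dl)).+1.
have hL : x < L%:R * dl.
  by have := truncnS_gt (x / dl); rewrite ltr_pdivrMr.
pose N := (Num.truncn (- (L%:R * y) / x)).+1.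
have hN1 : - (L%:R * y) < N%:R * x.
  by have := truncnS_gt (- (L%:R * y) / x); rewrite ltr_pdivrMr.
have hN2 : (N%:R - 1) * x <= - (L%:R * y).
  rewrite /N -natr1 addrK -ler_pdivlMr // truncn_le.
  apply: divr_ge0; last exact: ltW.
  by rewrite oppr_ge0 mulr_ge0_le0 // ltW.
have L0 : (0 : R) < L%:R by rewrite ltr0n.
set c := N%:R * x + L%:R * y.
have [t [t0 [te tc]]] : exists t, 0 < t /\ t < eps /\ t < c + L%:R * dl.
  by case: (lerP eps (c + L%:R * dl)) => h; [exists (eps / 2)|exists ((c + L%:R * dl)/2)];
    rewrite /c in h *; lra.
exists t; split; last by rewrite t0 te.
have -> : t = N%:R * x + L%:R * ((t - N%:R * x) / L%:R).
  by rewrite [L%:R * _]mulrC divfK ?gt_eqF // addrC subrK.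
apply: Gadd; first by rewrite /N; apply: mult; apply: Gx; rewrite subrr normr0.
rewrite /L; apply: mult; apply: Gy.
have -> : (t - N%:R * x) / L%:R - y = (t - c) / L%:R.
  by rewrite /c; field; rewrite gt_eqF.
rewrite normrM [X in _ * X]gtr0_norm ?invr_gt0 // ltr_pdivrMr //.
rewrite ltr_norml; apply/andP; split; rewrite /c in tc *; nra.
Qed.

Definition OP (P : set R) := forall p, P p -> exists2 e, 0 < e & forall z, `|z - p| < e -> P z.

Lemma upward (P : set R) (M : R) : 1 <= M -> OP P ->
  (forall p q, P p -> P q -> P (p + M * q)) ->
  (forall p, P p -> exists q, P q /\ (M + 1) * q <= p) ->
  (exists u, P u /\ 0 < u) -> forall a, P a -> forall x, a <= x -> P x.
Proof.
move=> M1 oP H2 H3 [u [Pu u0]] a Pa.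
have [eta eta0 Ha] := oP a Pa.
suff [d [Gd [d0 de]]] : exists d, (forall p, P p -> P (p + d)) /\ 0 < d /\ d < eta.
  apply: shift_up d0 _ Gd => z /andP[az zd]; apply: Ha.
  rewrite ger0_norm ?subr_ge0 //; lra.
have M0 : 0 < M by lra.
case: (pselect (exists v, P v /\ v < 0)) => [[v [Pv v0]]|nv].
  have [e1 e10 Hu] := oP u Pu; have [e2 e20 Hv] := oP v Pv.
  pose dl := Num.min e1 e2.
  have dl0 : 0 < dl by rewrite lt_min e10 e20.
  have G_of : forall w z, P z -> w = M * z -> forall p, P p -> P (p + w).
    by move=> w z Pz -> p Pp; apply: H2.
  have [g [Gg /andP[g0 ge]]] : exists g, (forall p, P p -> P (p + g)) /\ 0 < g < eta;
    last by exists g; split => //; rewrite g0 ge.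
  apply: (@semigroup_small (fun d => forall p, P p -> P (p + d)) (M * u) (M * v) (M * dl)) => //.
  - by move=> a1 b1 Ga Gb p Pp; rewrite addrA; exact: Gb _ (Ga _ Pp).
  - exact: mulr_gt0.
  - by rewrite pmulr_rlt0.
  - exact: mulr_gt0.
  - move=> z hz; apply: (G_of z (z / M)); last by rewrite mulrC divfK // gt_eqF.
    apply: Hu; have : `|z / M - u| < dl.
      have -> : z / M - u = (z - M * u) / M by field; rewrite gt_eqF.
      by rewrite normrM [X in _ * X]gtr0_norm ?invr_gt0 // ltr_pdivrMr //; move: hz; rewrite (mulrC M); lra.
    by move=> h; apply: lt_le_trans h _; rewrite ge_min lexx.
  - move=> z hz; apply: (G_of z (z / M)); last by rewrite mulrC divfK // gt_eqF.
    apply: Hv; have : `|z / M - v| < dl.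
      have -> : z / M - v = (z - M * v) / M by field; rewrite gt_eqF.
      by rewrite normrM [X in _ * X]gtr0_norm ?invr_gt0 // ltr_pdivrMr //; move: hz; rewrite (mulrC M); lra.
    by move=> h; apply: lt_le_trans h _; rewrite ge_min lexx orbT.
have pos : forall p, P p -> 0 <= p.
  by move=> p Pp; rewrite leNgt; apply/negP => hp; apply: nv; exists p.
have spos : forall p, P p -> 0 < p.
  move=> p Pp; rewrite lt_neqAle pos // andbT; apply/eqP => p0.
  have [e e0 He] := oP p Pp.
  have : P (p - e / 2) by apply: He; rewrite addrC addKr normrN gtr0_norm; lra.
  by move/pos; rewrite -p0; lra.
suff [q [Pq qe]] : exists q, P q /\ q < eta / M.
  exists (M * q); split; first by move=> p Pp; apply: H2.
  split; first by apply: mulr_gt0 => //; apply: spos.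
  by move: qe; rewrite ltr_pdivlMr // mulrC.
apply: contrapT => nq.
have lb : forall q, P q -> eta / M <= q.
  by move=> q Pq; rewrite leNgt; apply/negP => h; apply: nq; exists q.
have em0 : 0 < eta / M by apply: divr_gt0.
have ind : forall j : nat, forall q, P q -> j.+1%:R * (eta / M) <= q.
  elim=> [|j IH] q Pq; first by rewrite mul1r; apply: lb.
  have [q' [Pq' hq']] := H3 q Pq.
  have := IH q' Pq'; have := pos q' Pq'; rewrite -[j.+2%:R]natr1.
  have : (1 : R) <= j.+1%:R by rewrite ler1n.
  move: hq' em0; move: (eta / M) => E; move: (j.+1%:R : R) => J; nra.
have := ind (Num.truncn (u / (eta / M))) u Pu.
have := truncnS_gt (u / (eta / M)); rewrite ltr_pdivrMr //; lra.
Qed.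


Lemma interval_lemma (P : set R) (M : R) : 1 <= M -> OP P ->
  (forall p q, P p -> P q -> P (p + M * q)) ->
  (forall p, P p -> exists q, P q /\ (M + 1) * q <= p) ->
  (forall p, P p -> exists q, P q /\ p <= (M + 1) * q) ->
  forall a b c, P a -> P c -> a <= b -> b <= c -> P b.
Proof.
move=> M1 oP H2 H3 H3' a b c Pa Pc ab bc.
case: (ltP 0 c) => c0.
  exact: (@upward P M M1 oP H2 H3 (ex_intro _ c (conj Pc c0)) a Pa b ab).
have [e e0 He] := oP c Pc.
have Pv : P (c - e / 2) by apply: He; rewrite addrC addKr normrN gtr0_norm; lra.
pose P' := fun z => P (- z).
have oP' : OP P'.
  move=> p Pp; have [e1 e10 H1] := oP _ Pp; exists e1 => // z hz.
  by apply: H1; rewrite -normrN opprB addrC opprK.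
have H2' : forall p q, P' p -> P' q -> P' (p + M * q).
  by move=> p q Pp Pq; rewrite /P' opprD -mulrN; apply: H2.
have H3'' : forall p, P' p -> exists q, P' q /\ (M + 1) * q <= p.
  move=> p Pp; have [q [Pq hq]] := H3' _ Pp; exists (- q); split.
    by rewrite /P' opprK.
  by rewrite mulrN lerNl.
have Hup := @upward P' M M1 oP' H2' H3''.
have : P' (- b).
  apply: (Hup _ (- c)); last by rewrite lerN2.
  - by exists (- (c - e / 2)); split; [rewrite /P' opprK | lra].
  - by rewrite /P' opprK.
by rewrite /P' opprK.
Qed.

End reals.

Section P2.
Variable R : realType.
Local Open Scope ereal_scope.

Lemma ge0_le_integral_nm d (T : measurableType d) (mu : {measure set T -> \bar R})
  (D : set T) (f1 f2 : T -> \bar R) :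
  (forall x, D x -> 0 <= f1 x) -> (forall x, D x -> f1 x <= f2 x) ->
  \int[mu]_(x in D) f1 x <= \int[mu]_(x in D) f2 x.
Proof.
move=> f10 f12.
rewrite (ge0_integralE _ f10) ge0_integralE; last first.
  by move=> x Dx; apply: le_trans (f10 x Dx) (f12 x Dx).
apply: le_ereal_sup => _ [h hf <-]; exists h => //= x.
exact: le_trans (hf x) (lee_restrict f12 x).
Qed.

Lemma integral_pos_ex d (T : measurableType d) (mu : {measure set T -> \bar R})
  (D : set T) (f : T -> \bar R) :
  0 < \int[mu]_(x in D) f x -> exists x, D x /\ f x != 0.
Proof.
move=> h; case: (pselect (exists x, D x /\ f x != 0)) => // nx; exfalso.
suff e : \int[mu]_(x in D) f x = 0 by rewrite e ltxx in h.
apply: integral0_eq => x Dx; apply/eqP; case: (boolP (f x == 0)) => // fx.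
by exfalso; apply: nx; exists x.
Qed.

Local Close Scope ereal_scope.

Lemma enorm_scale k (z : 'rV[R]_k) t : 0 <= t <= 1 -> enorm (t *: z) <= enorm z.
Proof.
move=> /andP[t0 t1]; rewrite /enorm ler_sqrt; last first.
  by apply: sumr_ge0 => i _; exact: sqr_ge0.
apply: ler_sum => i _; rewrite mxE exprMn.
have : t ^+ 2 <= 1 by rewrite expr_le1.
have := sqr_ge0 (z ord0 i); move: (z ord0 i ^+ 2) => a; nra.
Qed.

Lemma sym_dec_mono k (u : 'rV[R]_k -> R) z z' :
  enorm z' <= enorm z -> (sym_dec u z <= sym_dec u z')%E.
Proof.
move=> hz; apply: ge0_le_integral_nm => t _; first by rewrite lee_fin indicE.
rewrite lee_fin !indicE.
case: (boolP (z \in _)) => [/set_mem [r [zr hr]]|_]; last by case: (_ \in _).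
rewrite mem_set //; exists r; split => //; exact: le_lt_trans hz zr.
Qed.

Lemma vcons0 k t (y : 'rV[R]_k) : vcons t y ord0 ord0 = t.
Proof. by rewrite /vcons mxE unlift_none. Qed.

Lemma vconsS k t (y : 'rV[R]_k) j : vcons t y ord0 (lift ord0 j) = y ord0 j.
Proof. by rewrite /vcons mxE liftK. Qed.

Lemma vhead_cons k t (y : 'rV[R]_k) : vhead (vcons t y) = t.
Proof. exact: vcons0. Qed.

Lemma vtail_cons k t (y : 'rV[R]_k) : vtail (vcons t y) = y.
Proof. by apply/rowP => j; rewrite /vtail mxE vconsS. Qed.

End P2.

Section P3.
Variable R : realType.

Lemma ball_rowE k (z w : 'rV[R]_k) r : ball z r w <-> (0 < r /\ forall j, `|z ord0 j - w ord0 j| < r).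
Proof.
split.
  move=> [r0 h]; split => // j; have := h ord0 j; by rewrite /ball /=.
move=> [r0 h]; split => // i j; rewrite (ord1 i); have := h j; by rewrite /ball /=.
Qed.

Lemma box_meas k (z : 'rV[R]_k) r : 0 < r ->
  measurable (@lp_coord _ _ (leb_pack R k) @^-1` ball z r) /\
  exists v : R, 0 < v /\ (v%:E <= lp_meas (leb_pack R k) (@lp_coord _ _ (leb_pack R k) @^-1` ball z r))%E.
Proof.
move=> r0; elim: k z => [|k IH] z.
  have -> : @lp_coord _ _ (leb_pack R 0) @^-1` ball z r = setT.
    apply/seteqP; split => // x _; apply/ball_rowE; split => // -[] //.
  split => //; exists 1; split => //=; rewrite diracT //.
have [mB [v [v0 hv]]] := IH (vtail z).
have -> : @lp_coord _ _ (leb_pack R k.+1) @^-1` ball z r =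
    (ball (z ord0 ord0) r) `*` (@lp_coord _ _ (leb_pack R k) @^-1` ball (vtail z) r).
  apply/seteqP; split => -[t w] /=.
    move/ball_rowE => [_ h]; split.
      by have := h ord0; rewrite vcons0 /ball /=.
    apply/ball_rowE; split => // j; have := h (lift ord0 j); by rewrite vconsS mxE.
  move=> [ht /ball_rowE [_ hw]]; apply/ball_rowE; split => // j.
  case: (unliftP ord0 j) => [j' ->|->]; first by rewrite vconsS; have := hw j'; rewrite mxE.
  by rewrite vcons0.
have mI : measurable (ball (z ord0 ord0) r : set R).
  by rewrite ball_itv; exact: measurable_itv.
split; first exact: measurableX.
exists ((r *+ 2) * v); split; first by rewrite mulr_gt0 // mulrn_wgt0.
rewrite /= /lprod product_measure1E // ball_itv.
set a := z ord0 ord0.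
have E : (lebesgue_measure (`](a - r)%R, (a + r)%R[%classic : set R) = (r *+ 2)%:E)%E.
  rewrite lebesgue_measure_itv /= lte_fin ltrBlDr -addrA ltrDl addr_gt0 //.
  by rewrite -EFinB; congr (_%:E); lra.
set LM := (X in (_ <= X * _)%E).
have -> : LM = (r *+ 2)%:E by exact: E.
rewrite EFinM.
by apply: lee_wpmul2l => //; rewrite lee_fin mulrn_wge0 // ltW.
Qed.

End P3.

Section P4.
Variable R : realType.
Variable n : nat.
Local Notation V := 'rV[R]_n.

Definition NN (G : V -> \bar R) := forall z, (0 <= G z)%E.
Definition LB (G : V -> \bar R) := forall z, (0 < G z)%E ->
  exists c r : R, 0 < c /\ 0 < r /\ forall z', ball z r z' -> (c%:E <= G z')%E.

Lemma conv_ge0 G1 G2 : NN G1 -> NN G2 -> NN (Defs.conv G1 G2).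
Proof. by move=> h1 h2 x; apply: integral_ge0 => z _; apply: mule_ge0. Qed.

Lemma conv_pos_ex G1 G2 x : NN G1 -> NN G2 -> (0 < Defs.conv G1 G2 x)%E ->
  exists y, (0 < G1 (x - y)%R)%E /\ (0 < G2 y)%E.
Proof.
move=> h1 h2 /integral_pos_ex [w [_]]; rewrite mule_eq0 negb_or => /andP[a b].
by exists (@lp_coord _ _ (leb_pack R n) w); rewrite !lt0e a b h1 h2.
Qed.

Lemma conv_LB_at G1 G2 x y : NN G1 -> NN G2 -> LB G1 -> LB G2 ->
  (0 < G1 (x - y)%R)%E -> (0 < G2 y)%E ->
  exists c r : R, 0 < c /\ 0 < r /\ forall x', ball x r x' -> (c%:E <= Defs.conv G1 G2 x')%E.
Proof.
move=> n1 n2 l1 l2 p1 p2.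
have [c1 [r1 [c10 [r10 H1]]]] := l1 _ p1.
have [c2 [r2 [c20 [r20 H2]]]] := l2 _ p2.
pose rho := Num.min r1 r2 / 2.
have rho0 : 0 < rho by rewrite divr_gt0 // lt_min r10 r20.
have rr1 : rho + rho <= r1.
  have : Num.min r1 r2 <= r1 by rewrite ge_min lexx.
  rewrite /rho; have : 0 < Num.min r1 r2 by rewrite lt_min r10 r20.
  move: (Num.min r1 r2) => mm; lra.
have rr2 : rho <= r2.
  have : Num.min r1 r2 <= r2 by rewrite ge_min lexx orbT.
  rewrite /rho; have : 0 < Num.min r1 r2 by rewrite lt_min r10 r20.
  move: (Num.min r1 r2) => mm; lra.
have [mB [v [v0 hv]]] := @box_meas R n y rho rho0.
exists (c1 * c2 * v), rho; split; first by rewrite !mulr_gt0.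
split => // x' hx'.
set B := (X in lp_meas _ X) in hv mB.
apply: (@le_trans _ _ ((c1 * c2)%:E * lp_meas (leb_pack R n) B)%E).
  by rewrite EFinM lee_wpmul2l // lee_fin mulr_ge0 // ltW.
rewrite -(setIT B) -integral_indic // -(integralZl_indic measurableT (fun=> B)) //; last first.
  by move=> h; exfalso; move: h; rewrite ltNge mulr_ge0 // ltW.
apply: ge0_le_integral_nm => w _.
  by rewrite lee_fin mulr_ge0 // ?ltW ?mulr_gt0.
rewrite indicE; case: (boolP (w \in B)) => [/set_mem hw|_]; last first.
  by rewrite mulr0 mule_ge0.
rewrite mulr1 EFinM lee_pmul // ?lee_fin; try exact: ltW.
  apply: H1; move/ball_rowE: hw => [_ hw]; move/ball_rowE: hx' => [_ hx'].
  apply/ball_rowE; split; first by rewrite (lt_le_trans _ rr1) // addr_gt0.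
  move=> j; have := hw j; have := hx' j; rewrite !mxE.
  set a := x ord0 j; set b := x' ord0 j; set yy := y ord0 j.
  set ww := lp_coord _ ord0 j.
  have := ler_normD (a - b) (ww - yy).
  have -> : a - yy - (b - ww) = (a - b) + (ww - yy) by ring.
  rewrite (distrC yy ww); lra.
apply: H2; move/ball_rowE: hw => [_ hw]; apply/ball_rowE; split => // j.
exact: lt_le_trans (hw j) rr2.
Qed.

Lemma conv_LB G1 G2 : NN G1 -> NN G2 -> LB G1 -> LB G2 -> LB (Defs.conv G1 G2).
Proof.
move=> n1 n2 l1 l2 x /(conv_pos_ex n1 n2) [y [p1 p2]].
exact: conv_LB_at p1 p2.
Qed.

Lemma conv_pos G1 G2 x y : NN G1 -> NN G2 -> LB G1 -> LB G2 ->
  (0 < G1 (x - y)%R)%E -> (0 < G2 y)%E -> (0 < Defs.conv G1 G2 x)%E.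
Proof.
move=> n1 n2 l1 l2 p1 p2; have [c [r [c0 [r0 H]]]] := conv_LB_at n1 n2 l1 l2 p1 p2.
apply: lt_le_trans (H x _); first by rewrite lte_fin.
by apply/ball_rowE; split => // j; rewrite subrr normr0.
Qed.

End P4.


Lemma near_gt (R : realType) (T : pseudoMetricType R) (g : T -> R) x c :
  {for x, continuous g} -> c < g x -> exists r, 0 < r /\ forall y, ball x r y -> c < g y.
Proof.
move=> cg cx; have := cvgr_gt (g x) cg c cx. move=> /(_ _) /nbhs_ballP [r r0 H].
by exists r; split => // y /H.
Qed.

Lemma vcons_seg (R : realType) k (w : 'rV[R]_k.+1) t :
  vhead w *: e1 R k + t *: (w - vhead w *: e1 R k) = vcons (vhead w) (t *: vtail w).
Proof.
apply/rowP => i; rewrite /vcons /e1 /vtail !mxE.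
have z : (0 : 'I_1) = ord0 by apply/val_inj.
case: (unliftP ord0 i) => [j ->|->]; rewrite ?mxE z.
  by rewrite eqxx [lift _ _ == _]eq_sym (negbTE (neq_lift _ _)) /= mulr0 add0r subr0.
by rewrite eqxx /vhead mulr1; ring.
Qed.

Lemma vhead_e1 (R : realType) k p : vhead (p *: e1 R k) = p.
Proof. by rewrite /vhead /e1 !mxE eqxx mulr1. Qed.

Lemma vheadD (R : realType) k (x y : 'rV[R]_k.+1) : vhead (x + y) = vhead x + vhead y.
Proof. by rewrite /vhead mxE. Qed.

Lemma vheadB (R : realType) k (x y : 'rV[R]_k.+1) : vhead (x - y) = vhead x - vhead y.
Proof. by rewrite /vhead !mxE. Qed.


Section Main.
Variable R : realType.
Variable n : nat.
Local Notation V := 'rV[R]_n.+1.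
Variables (f h : V -> R) (Q : 'M[R]_n.+1) (e : V) (k : nat).
Hypothesis cf : continuous f.
Hypothesis f0 : forall x, 0 <= f x.
Hypothesis hQ : Q^T *m Q = 1%:M.
Hypothesis he : e *m Q^T = e1 R n.
Hypothesis hst : forall x, (f x)%:E = steiner1 (rotf Q f) (x *m Q^T).
Hypothesis h0 : forall x, 0 < h x.
Hypothesis heq : forall x, (f x)%:E = ((h x)%:E * convpow (fun x => (f x)%:E) k.+1 x)%E.

Let s (x : V) := vhead (x *m Q^T).
Let S := [set x : V | 0 < f x].
Let F := fun x : V => (f x)%:E.

Lemma sD x y : s (x + y) = s x + s y.
Proof. by rewrite /s mulmxDl vheadD. Qed.

Lemma sB x y : s (x - y) = s x - s y.
Proof. by rewrite /s mulmxBl vheadB. Qed.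

Lemma sZe p : s (p *: e) = p.
Proof. by rewrite /s -scalemxAl he vhead_e1. Qed.

Lemma seg x t : 0 <= t <= 1 -> f x <= f (s x *: e + t *: (x - s x *: e)).
Proof.
move=> t01; rewrite -lee_fin !hst.
have -> : (s x *: e + t *: (x - s x *: e)) *m Q^T =
    vcons (vhead (x *m Q^T)) (t *: vtail (x *m Q^T)).
  by rewrite mulmxDl -!scalemxAl mulmxBl -scalemxAl he -vcons_seg.
rewrite /steiner1 vhead_cons vtail_cons.
apply: sym_dec_mono; exact: enorm_scale.
Qed.

Lemma axis x : S x -> S (s x *: e).
Proof.
rewrite /S /= => fx; apply: lt_le_trans fx _.
by have := @seg x 0; rewrite scale0r addr0; apply; rewrite lexx ler01.
Qed.

Lemma seg1 x : s x *: e + 1 *: (x - s x *: e) = x.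
Proof. by rewrite scale1r addrC subrK. Qed.

Lemma NN_F : NN F.
Proof. by move=> z; rewrite lee_fin. Qed.

Lemma LB_F : LB F.
Proof.
move=> z; rewrite lte_fin => fz.
have cz : {for z, continuous f} by apply: cf.
have hz : f z / 2 < f z by lra.
have [r [r0 H]] := near_gt cz hz.
exists (f z / 2), r; split; first by lra.
by split => // z' /H hz'; rewrite lee_fin ltW.
Qed.

Lemma convpow_NN j : NN (convpow F j).
Proof. elim: j => [|j IH]; [exact: NN_F | exact: conv_ge0 NN_F IH]. Qed.

Lemma convpow_LB j : LB (convpow F j).
Proof.
elim: j => [|j IH]; first exact: LB_F.
exact: conv_LB NN_F (@convpow_NN j) LB_F IH.
Qed.

Let T j := [set x : V | (0 < convpow F j x)%E].

Lemma T_dec j x : T j.+1 x -> exists y, S (x - y) /\ T j y.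
Proof.
move/(conv_pos_ex NN_F (@convpow_NN j)) => [y [p1 p2]].
by exists y; split => //; move: p1; rewrite /F lte_fin.
Qed.

Lemma T_comp j x y : S (x - y) -> T j y -> T j.+1 x.
Proof.
move=> p1 p2; rewrite /T /=.
apply: (conv_pos (y := y)) NN_F (@convpow_NN j) LB_F (@convpow_LB j) _ p2.
by rewrite /F lte_fin.
Qed.

Lemma T_axis j x : T j x -> T j (s x *: e).
Proof.
elim: j x => [|j IH] x; first by rewrite /T /= /F lte_fin => /axis.
move/T_dec => [y [Sxy Ty]].
apply: (T_comp (y := s y *: e)); last exact: IH.
by rewrite -scalerBl -sB; apply: axis.
Qed.

Let Pj j p := T j (p *: e).
Let P := Pj 0.

Lemma P_S p : P p <-> S (p *: e).
Proof. by rewrite /P /Pj /T /= /F lte_fin. Qed.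

Lemma Qdec j p : Pj j.+1 p -> exists p1, P p1 /\ Pj j (p - p1).
Proof.
move/T_dec => [y [Sy Ty]]; exists (s (p *: e - y)); split.
  by apply/P_S; apply: axis.
by rewrite sB sZe opprB addrC subrK; apply: T_axis.
Qed.

Lemma Qcomp j p1 r : P p1 -> Pj j r -> Pj j.+1 (p1 + r).
Proof.
move=> /P_S h1 h2; apply: (T_comp (y := r *: e)) h2.
by rewrite -scalerBl addrK.
Qed.

Lemma Qmult j q : P q -> Pj j (j.+1%:R * q).
Proof.
move=> Pq; elim: j => [|j IH]; first by rewrite mul1r.
have -> : j.+2%:R * q = q + j.+1%:R * q by rewrite -natr1 mulrDl mul1r addrC.
exact: Qcomp.
Qed.

Lemma Qlow j r : Pj j r -> exists q, P q /\ j.+1%:R * q <= r.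
Proof.
elim: j r => [|j IH] r; first by move=> Pr; exists r; rewrite mul1r lexx.
move/Qdec => [p1 [Pp1 /IH [q [Pq hq]]]].
case: (lerP p1 q) => hpq.
  exists p1; split => //; rewrite -natr1 mulrDl mul1r.
  have : j.+1%:R * p1 <= j.+1%:R * q by rewrite ler_pM2l // ltr0n.
  lra.
exists q; split => //; rewrite -natr1 mulrDl mul1r; lra.
Qed.

Lemma Qhigh j r : Pj j r -> exists q, P q /\ r <= j.+1%:R * q.
Proof.
elim: j r => [|j IH] r; first by move=> Pr; exists r; rewrite mul1r lexx.
move/Qdec => [p1 [Pp1 /IH [q [Pq hq]]]].
case: (lerP q p1) => hpq.
  exists p1; split => //; rewrite -natr1 mulrDl mul1r.
  have : j.+1%:R * q <= j.+1%:R * p1 by rewrite ler_pM2l // ltr0n.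
  lra.
exists q; split => //; rewrite -natr1 mulrDl mul1r; lra.
Qed.

Lemma P_fix p : P p <-> Pj k.+1 p.
Proof.
rewrite P_S /Pj /T /S /=.
have E := heq (p *: e); rewrite -/F in E.
have G0 := @convpow_NN k.+1 (p *: e).
move: E G0; set G := convpow F k.+1 (p *: e) => E G0.
split => hp.
  rewrite lt0e G0 andbT; apply/negP => G00; move: E.
  by rewrite (_ : G = 0) ?mule0; [move=> /eqP; rewrite eqe => /eqP fz; rewrite fz ltxx in hp | exact/eqP].
by rewrite -lte_fin E mule_gt0 // lte_fin.
Qed.



Lemma contZe : continuous (fun q : R => q *: e).
Proof. by move=> q; apply: cvgZr_tmp; exact: cvg_id. Qed.

Lemma P_OP : OP P.
Proof.
move=> p /P_S Sp.
have cg : {for p, continuous (fun q : R => f (q *: e))}.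
  by apply: continuous_comp; [exact: contZe | exact: cf].
have [r [r0 H]] := near_gt cg Sp.
exists r => // z hz; apply/P_S; apply: H; rewrite /ball /=.
by rewrite distrC.
Qed.

Lemma P_interval : is_interval P.
Proof.
move=> a c Pa Pc b /andP[ab bc].
apply: (@interval_lemma R P k.+1%:R _ P_OP _ _ _ a b c) => //.
- by rewrite ler1n.
- move=> p q Pp Pq; apply/P_fix; apply: Qcomp => //; exact: Qmult.
- move=> p /P_fix /Qlow [q [Pq hq]]; exists q; split => //; by rewrite natr1.
- move=> p /P_fix /Qhigh [q [Pq hq]]; exists q; split => //; by rewrite natr1.
Qed.

Lemma S_connected : connected S.
Proof.
case: (pselect (exists x0, S x0)) => [[x0 Sx0]|nS]; last first.
  have -> : S = set0 by apply/seteqP; split => // x Sx; apply: nS; exists x.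
  exact: connected0.
suff -> : S = connected_component S x0 by apply: component_connected.
apply/seteqP; split; last exact: connected_component_sub.
have cc : forall C a b, connected C -> C `<=` S -> C a -> C b ->
    connected_component S a b.
  by move=> C a b cC CS Ca Cb; exists C.
have segc : forall x, S x -> connected_component S (s x *: e) x.
  move=> x Sx; pose g := fun t : R => s x *: e + t *: (x - s x *: e).
  have contg : continuous g.
    move=> t; apply: cvgD; first exact: cvg_cst.
    by apply: cvgZr_tmp; exact: cvg_id.
  apply: (cc (g @` `[0, 1]%classic)).
  - apply: connected_continuous_connected; last exact: continuous_subspaceT.
    by apply/connected_intervalP; exact: interval_is_interval.
  - move=> _ [t t01 <-]; rewrite /S /=; apply: (lt_le_trans Sx); apply: seg.
    by move: t01; rewrite /= in_itv.
  - by exists 0; [rewrite /= in_itv /= lexx ler01 | rewrite /g scale0r addr0].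
  - by exists 1; [rewrite /= in_itv /= lexx ler01 | exact: seg1].
move=> x Sx.
have A : connected_component S (s x0 *: e) (s x *: e).
  apply: (cc ((fun p => p *: e) @` P)).
  - apply: connected_continuous_connected; last exact: continuous_subspaceT contZe.
    by apply/connected_intervalP; exact: P_interval.
  - by move=> _ [p /P_S Pp <-].
  - by exists (s x0); [apply/P_S; apply: axis | ].
  - by exists (s x); [apply/P_S; apply: axis | ].
apply: connected_component_trans (segc _ Sx).
apply: connected_component_trans A.
exact: connected_component_sym (segc _ Sx0).
Qed.

End Main.

Unset Implicit Arguments.

Theorem lemma4p2 (R : realType) (n : nat) (hn : (2 <= n)%N) (m : nat) (hm : (2 <= m)%N)
    (f h : 'rV[R]_n -> R) :
  continuous f ->
  (forall x, 0 <= f x) ->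
  in_Lp (m%:R / (m%:R - 1)) f ->
  (exists e : 'rV[R]_n, unit_sphere e /\
     exists Q : 'M[R]_n, rot_to_e1 e Q /\ steinerQ_defined Q f /\
       (forall x, (f x)%:E = steinerQ Q f x)) ->
  continuous h ->
  (forall x, 0 < h x) ->
  (forall x, (f x)%:E = ((h x)%:E * mconv f m x)%E) ->
  connected [set x | 0 < f x].
Proof.
case: n hn f h => [//|n'] hn f h.
case: m hm => [//|[//|k]] hm.
move=> cf f0 _ [e [_ [Q [[hQ he] [_ hst]]]]] ch h0 heq.
exact: (@S_connected R n' f h Q e k cf f0 he hst h0 heq).
Qed.
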